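(* Let $n\in\mathbb N$, let $p$ be a prime number, let $m$ be a positive integer, and let $x\in\mathbb Z_n\times\mathbb Z_n$ have order $\operatorname{ord}(x)=p^m$ in the group $\mathbb Z_n\times\mathbb Z_n$. Let $A\subseteq\mathbb Z_n\times\mathbb Z_n$. If $\widehat{\mathbf 1}_A^{sym}(x)=0$, then $$|A\cap\langle px\rangle^{\perp_s}|=p\cdot|A\cap\langle x\rangle^{\perp_s}|.$$
   Context: $\mathbb Z_n$ is the additive cyclic group of order $n$. For $x=(x_1,x_2),y=(y_1,y_2)\in\mathbb Z_n\times\mathbb Z_n$ the symplectic form is $\langle x,y\rangle_s=x_1y_2-x_2y_1\in\mathbb Z_n$. For $A\subseteq\mathbb Z_n\times\mathbb Z_n$ the discrete symplectic Fourier transform of its indicator is $\widehat{\mathbf 1}_A^{sym}(\xi)=\sum_{a\in A}e^{\frac{2\pi i}{n}\langle a,\xi\rangle_s}$. For $x\in\mathbb Z_n\times\mathbb Z_n$, $\langle x\rangle$ denotes the cyclic subgroup generated by $x$. For $H\subseteq\mathbb Z_n\times\mathbb Z_n$, the symplectic orthogonal set is $H^{\perp_s}=\{g\in\mathbb Z_n\times\mathbb Z_n:\langle g,h\rangle_s=0\ \forall h\in H\}$. *)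

(* Defs.v *)
From HB Require Import structures.
From mathcomp Require Import all_boot all_order all_algebra all_fingroup all_solvable all_field.
Set Implicit Arguments. Unset Strict Implicit. Unset Printing Implicit Defensive.
Import GRing.Theory Num.Theory.
Local Open Scope ring_scope.

(* Z_n x Z_n is modelled as ('Z_n * 'Z_n); (we require 1 < n in the theorem).
   It carries the componentwise zmodType structure (ring notation: +, *+)
   and, via gproduct's external product, a finGroupType structure whose
   group law is the same componentwise addition (so <[x]> is the cyclic
   subgroup generated by x and #[x] its order). *)

Definition sympl (n : nat) (x y : 'Z_n * 'Z_n) : 'Z_n := x.1 * y.2 - x.2 * y.1.

(* e^{2 pi i / n} in the algebraic complex numbers algC:
   n.-root (-1) is the n-th root of -1 with minimal nonnegative argument,
   i.e. e^{i pi / n}; its square is e^{2 pi i / n}. *)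
Definition omega (n : nat) : algC := (n.-root (-1)) ^+ 2.

Definition symFT (n : nat) (A : {set 'Z_n * 'Z_n}) (xi : 'Z_n * 'Z_n) : algC :=
  \sum_(a in A) omega n ^+ (nat_of_ord (sympl a xi)).

Definition sperp (n : nat) (H : {set 'Z_n * 'Z_n}) : {set 'Z_n * 'Z_n} :=
  [set g | [forall h in H, sympl g h == 0]].

(* Main.v *)
Require Import Defs.
From mathcomp Require Import all_boot all_order all_algebra all_fingroup all_solvable all_field.
From mathcomp Require Import lra zify.
Import Order.TTheory GRing.Theory Num.Theory.
Local Open Scope ring_scope.

Lemma CLs {R : realFieldType} {x1 y1 x2 y2 : R}: x1^+2+y1^+2 = 1 -> x2^+2+y2^+2= 1 -> 0 <= y1 -> 0 <= y2 -> 0 < x1*y2 - x2*y1 -> x2 < x1.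
Proof. move=> h1 h2 hy1 hy2 hD. rewrite ltNge; apply/negP => hx.
have [hx1|hx1] := lerP 0 x1.
  have : y2 <= y1 by nra.
  nra.
have [hx2|hx2] := lerP 0 x2.
 nra.
have : y1 <= y2 by nra.
nra.
Qed.

Definition reR (z : algC) : algR := in_algR (Creal_Re z).
Definition imR (z : algC) : algR := in_algR (Creal_Im z).

Lemma unitR {z : algC} : `|z| = 1 -> reR z ^+ 2 + imR z ^+ 2 = 1.
Proof.
move=> h; apply: val_inj => /=.
rewrite -normC2_Re_Im h expr1n //.
Qed.

Lemma leRv (a b : algR) : (a <= b) = (val a <= val b).
Proof. by []. Qed.
Lemma ltRv (a b : algR) : (a < b) = (val a < val b).
Proof. by rewrite !lt_def leRv (inj_eq val_inj). Qed.

Lemma CLc {R : realFieldType} {x1 y1 x2 y2 : R}: x1^+2+y1^+2 = 1 -> x2^+2+y2^+2= 1 -> 0 <= y1 -> 0 <= y2 -> 0 < y1 + y2 -> x2 < x1 -> 0 < x1*y2 - x2*y1.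
Proof. move=> h1 h2 hy1 hy2 hy hx. rewrite ltNge; apply/negP => hD.
have [hx1|hx1] := lerP 0 x1.
 have [hx2|hx2] := lerP 0 x2.
  have : y1 <= y2 by nra.
  nra.
 have h3: 0 <= x1*y2 by nra.
 have h4: y1*x2 <= 0 by nra.
 have h5: y1 = 0 by nra.
 have h6: x1 = 0 by nra.
 nra.
have : y2 <= y1 by nra.
nra.
Qed.

Lemma L1 (c d : algC) : `|c| = 1 -> `|d| = 1 -> 0 <= 'Im c -> 0 <= 'Im d ->
  0 < 'Im (d / c) -> 'Re d < 'Re c.
Proof.
move=> hc hd h1 h2; rewrite Im_div hc expr1n divr1 => h3.
have := CLs (unitR hc) (unitR hd); rewrite !ltRv !leRv /=.
by apply.
Qed.

Lemma L2 (c d : algC) : `|c| = 1 -> `|d| = 1 -> 0 <= 'Im c -> 0 <= 'Im d ->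
  0 < 'Im c + 'Im d -> 'Re d < 'Re c -> 0 < 'Im (d / c).
Proof.
move=> hc hd h1 h2 h3 h4; rewrite Im_div hc expr1n divr1.
have := CLc (unitR hc) (unitR hd); rewrite !ltRv !leRv /=.
by apply.
Qed.

Lemma Lsq {R : realFieldType} {x1 y1 x2 y2 : R}: x1^+2+y1^+2 = 1 -> x2^+2+y2^+2= 1 -> 0 <= y1 -> 0 <= y2 -> x1 = x2 -> y1 = y2.
Proof. move=> h1 h2 hy1 hy2 hx. subst x2.
suff: y1 ^+ 2 = y2 ^+ 2.
move=> h; have: (y1 - y2) * (y1 + y2) = 0 by rewrite -subr_sqr h subrr.
move/eqP; rewrite mulf_eq0 => /orP[]; rewrite ?subr_eq0 => /eqP //; nra.
lra.
Qed.

Lemma L3 (c d : algC) : `|c| = 1 -> `|d| = 1 -> 0 <= 'Im c -> 0 <= 'Im d ->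
  'Re c = 'Re d -> c = d.
Proof.
move=> hc hd h1 h2 h3.
have h4 : reR c = reR d by apply: val_inj.
have := Lsq (unitR hc) (unitR hd) h1 h2 h4 => /(congr1 val) /= h5.
by rewrite [c]Crect [d]Crect h3 h5.
Qed.

Lemma Lbnd {R : realFieldType} {x y : R}: x^+2+y^+2 = 1 -> -1 <= x <= 1.
Proof. move=> h; apply/andP; split; nra. Qed.
Lemma Lbnd2 {R : realFieldType} {x y : R}: x^+2+y^+2 = 1 -> x^+2 = 1 -> y = 0.
Proof. move=> h1 h2. have : y ^+ 2 = 0 by lra. by move/eqP; rewrite expf_eq0 => /andP[_ /eqP]. Qed.

Lemma L5 (c : algC) : `|c| = 1 -> -1 <= 'Re c <= 1.
Proof. by move=> hc; exact: (Lbnd (unitR hc)). Qed.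

Lemma L6 (c : algC) : `|c| = 1 -> 'Re c ^+ 2 = 1 -> c = 'Re c.
Proof.
move=> hc h. have h' : reR c ^+ 2 = 1 by apply: val_inj.
have := Lbnd2 (unitR hc) h' => /(congr1 val) /= h2.
by rewrite {1}[c]Crect h2 mulr0 addr0.
Qed.


Arguments L1 {c d}. Arguments L2 {c d}. Arguments L3 {c d}. Arguments L5 {c}. Arguments L6 {c}.
Lemma unit_inv (a : algC) : `|a| = 1 -> a^-1 = a^*.
Proof. by move=> h; rewrite invC_norm h expr1n invr1 mul1r. Qed.

Lemma unit_conj {a : algC} : `|a| = 1 -> `|a^*| = 1.
Proof. by move=> h; rewrite norm_conjC. Qed.

Lemma unitM {a b : algC} : `|a| = 1 -> `|b| = 1 -> `|a * b| = 1.
Proof. by move=> ha hb; rewrite normrM ha hb mulr1. Qed.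

Lemma unitV {a b : algC} : `|a| = 1 -> `|b| = 1 -> `|a / b| = 1.
Proof. by move=> ha hb; rewrite normf_div ha hb divr1. Qed.

Lemma unitX {a : algC} k : `|a| = 1 -> `|a ^+ k| = 1.
Proof. by move=> ha; rewrite normrX ha expr1n. Qed.

Lemma unitN {a : algC} : `|a| = 1 -> `|- a| = 1.
Proof. by move=> ha; rewrite normrN. Qed.

Lemma L7 {c : algC} : `|c| = 1 -> 'Im c = 0 -> c = 1 \/ c = -1.
Proof.
move=> hc h0.
have h1 : reR c ^+ 2 = 1.
  have := unitR hc; rewrite (_ : imR c = 0) ?expr0n ?addr0 //.
  by apply: val_inj; rewrite /= h0.
have hc' : c = 'Re c by rewrite {1}[c]Crect h0 mulr0 addr0.
have : (reR c - 1) * (reR c + 1) = 0 by rewrite -subr_sqr h1 expr1n subrr.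
move/eqP; rewrite mulf_eq0 => /orP[]; rewrite ?subr_eq0 ?addr_eq0 => /eqP /(congr1 val) /= h.
  by left; rewrite hc' h.
by right; rewrite hc' h.
Qed.

Lemma Im1 : 'Im (1 : algC) = 0.
Proof. by apply/Creal_ImP; rewrite rpred1. Qed.
Lemma ImN1 : 'Im (-1 : algC) = 0.
Proof. by rewrite raddfN /= Im1 oppr0. Qed.
Lemma Re1 : 'Re (1 : algC) = 1.
Proof. by apply/Creal_ReP; rewrite rpred1. Qed.
Lemma ReN1 : 'Re (-1 : algC) = -1.
Proof. by rewrite raddfN /= Re1. Qed.

Lemma realIm (c : algC) : 'Im c \is Num.real. Proof. exact: Creal_Im. Qed.
Lemma realRe (c : algC) : 'Re c \is Num.real. Proof. exact: Creal_Re. Qed.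

Lemma signN1 k : (-1 : algC) ^+ k = if odd k then -1 else 1.
Proof. by rewrite -signr_odd; case: (odd k); rewrite ?expr1 ?expr0. Qed.

Lemma ltle_contra {R : numDomainType} (x y : R) : x < y -> y <= x -> False.
Proof. by move=> h1 h2; have := lt_le_trans h1 h2; rewrite ltxx. Qed.

Section Prim.
Variable n : nat.
Hypothesis n1 : (1 < n)%N.
Variable g : algC.
Hypothesis pg : (n.*2).-primitive_root g.

Let y := n.-root (-1 : algC).
Let n0 : (0 < n)%N. Proof. exact: ltnW. Qed.

Let yn : y ^+ n = -1. Proof. exact: rootCK. Qed.

Let unit_of (z : algC) : z ^+ n = -1 -> `|z| = 1.
Proof.
move=> hz; have : `|z| ^+ n = 1 by rewrite -normrX hz normrN1.
by move/eqP; rewrite pexpr_eq1 // => /eqP.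
Qed.

Let ymax (z : algC) : z ^+ n = -1 -> 'Re z <= 'Re y.
Proof.
move=> hz; have [h|h] := real_leP (real0 algC) (realIm z).
  exact: rootC_Re_max.
rewrite -Re_conj; apply: rootC_Re_max => //.
  by rewrite -rmorphXn hz rmorphN1.
by rewrite Im_conj oppr_ge0 ltW.
Qed.

Let yunit : `|y| = 1. Proof. exact: unit_of. Qed.
Let yIm0 : 0 <= 'Im y. Proof. exact: Im_rootC_ge0. Qed.

Let gn : g ^+ n = -1.
Proof.
have h : (g ^+ n) ^+ 2 = 1 by rewrite -exprM muln2 prim_expr_order.
have hn : g ^+ n != 1.
  rewrite -(prim_order_dvd pg); apply/negP => /(dvdn_leq n0); lia.
have : (g ^+ n - 1) * (g ^+ n + 1) = 0 by rewrite -subr_sqr h expr1n subrr.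
move/eqP; rewrite mulf_eq0 subr_eq0 (negbTE hn) /= addr_eq0 => /eqP //.
Qed.

Let gunit : `|g| = 1. Proof. exact: unit_of. Qed.

Let g2 k : (0 < k < n)%N -> g ^+ (k.*2) != 1.
Proof.
move=> /andP[k0 kn]; rewrite -(prim_order_dvd pg); apply/negP => /dvdn_leq.
have hk : (0 < k.*2)%N by lia.
move=> /(_ hk); lia.
Qed.

Let gIm : 'Im g != 0.
Proof.
apply/negP => /eqP /(L7 gunit) [] h.
  by have := g2 1 (n1); rewrite /= expr2 h mulr1 eqxx.
by have := g2 1 (n1); rewrite /= expr2 h mulrNN mulr1 eqxx.
Qed.

Definition vv := if 0 <= 'Im g then g else g^*.

Let vn : vv ^+ n = -1.
Proof. by rewrite /vv; case: ifP => // _; rewrite -rmorphXn gn rmorphN1. Qed.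
Let vunit : `|vv| = 1. Proof. exact: unit_of. Qed.
Let vIm : 0 < 'Im vv.
Proof.
rewrite /vv; case: ifP => h; first by rewrite lt_def gIm h.
by rewrite Im_conj oppr_gt0 real_ltNge ?realIm ?real0 // h.
Qed.
Let v2 k : (0 < k < n)%N -> vv ^+ (k.*2) != 1.
Proof.
move=> hk; rewrite /vv; case: ifP => _; first exact: g2.
by rewrite -rmorphXn fmorph_eq1 g2.
Qed.

Let yIm : 0 < 'Im y.
Proof.
rewrite lt_def yIm0 andbT; apply/negP => /eqP /(L7 yunit) [] h.
  by move: yn; rewrite h expr1n => /eqP; rewrite -subr_eq0 opprK -mulr2n pnatr_eq0.
have := ymax _ vn; rewrite h ReN1 => hle.
have := L5 vunit => /andP[hge _].
have hre : 'Re vv = -1 by apply/eqP; rewrite eq_le hle hge.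
have := L6 vunit; rewrite hre sqrrN expr1n => /(_ erefl) hv.
by have := vIm; rewrite hv ImN1 ltxx.
Qed.


Let ynz : y != 0.
Proof. by rewrite -normr_eq0 yunit oner_eq0. Qed.

Let crossing (a : algC) : `|a| = 1 -> 0 < 'Im a -> 'Im (a * y) <= 0 -> a * y != -1 ->
  'Re y < 'Re (- a) /\ 'Re y < 'Re (- (a * y)).
Proof.
move=> ha hIa hIb hb.
have anz : a != 0 by rewrite -normr_eq0 ha oner_eq0.
have hay : `|a * y| = 1 by exact: unitM.
split.
  move: hIb; rewrite le_eqVlt => /orP[/eqP h0|hneg].
    case: (L7 hay h0) => h1; last by rewrite h1 eqxx in hb.
    have ha' : a = y^* by rewrite -unit_inv //; apply: (mulIf ynz); rewrite h1 mulVf.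
    by move: hIa; rewrite ha' Im_conj oppr_gt0 => h; have := lt_trans h yIm; rewrite ltxx.
  have ac : `|- a^*| = 1 by apply: unitN; apply: unit_conj.
  suff : 'Re y < 'Re (- a^*) by rewrite !raddfN /= Re_conj.
  apply: (L1 ac yunit _ yIm0).
    by rewrite raddfN /= Im_conj opprK ltW.
  have -> : y / - a^* = - (a * y).
    by rewrite -unit_inv // invrN invrK mulrN mulrC.
  by rewrite raddfN oppr_gt0.
have hc : `|- (a * y)| = 1 by exact: unitN.
apply: (L1 hc yunit _ yIm0).
  by rewrite raddfN oppr_ge0.
have -> : y / - (a * y) = - a^-1 by rewrite invrN mulrN invfM mulrCA mulfV // mulr1.
by rewrite unit_inv // raddfN /= Im_conj opprK.
Qed.

Let Im0gen q k : y ^+ q = -1 -> (forall k, (0 < k < q)%N -> 0 < 'Im (y ^+ k)) ->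
  (k <= q)%N -> 0 <= 'Im (y ^+ k).
Proof.
move=> hyq hpos hk; case: k hk => [|k] hk; first by rewrite expr0 Im1.
case: (ltngtP k.+1 q) => [h|h|->].
- by apply: ltW; apply: hpos; rewrite h.
- by rewrite ltnNge hk in h.
- by rewrite hyq ImN1.
Qed.

Let locate q : (0 < q < n)%N -> y ^+ q = -1 ->
  (forall k, (0 < k < q)%N -> 0 < 'Im (y ^+ k)) -> False.
Proof.
move=> hq hyq hpos.
have Im0 k : (k <= q)%N -> 0 <= 'Im (y ^+ k) by exact: Im0gen.
have vne j : vv != y ^+ j.
  apply/negP => /eqP hv; have := v2 q hq; rewrite hv -exprM mulnC exprM.
  rewrite -mul2n mulnC exprM hyq sqrrN expr1n expr1n eqxx //.
pose P j := (j <= q)%N && ('Re vv < 'Re (y ^+ j)).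
have P0 : P 0%N.
  rewrite /P /= expr0 Re1; have := L5 vunit => /andP[_ h1].
  rewrite lt_neqAle h1 andbT; apply/negP => /eqP h.
  have := L6 vunit; rewrite h expr1n => /(_ erefl) h'.
  by have := vne 0%N; rewrite expr0 h' eqxx.
have Pb j : P j -> (j <= q)%N by case/andP.
have [k Pk kmax] := ex_maxnP (ex_intro _ 0%N P0) Pb.
case/andP: Pk => kq hvk.
have kq' : (k < q)%N.
  rewrite ltn_neqAle kq andbT; apply/negP => /eqP hkq.
  move: hvk; rewrite hkq hyq ReN1 => h.
  have := L5 vunit => /andP[h1 _]. have := lt_le_trans h h1. by rewrite ltxx.
have hbv : 'Re (y ^+ k.+1) < 'Re vv.
  have nP : ~~ P k.+1 by apply/negP => /kmax; rewrite ltnn.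
  move: nP; rewrite /P kq' /= -real_leNgt ?realRe // le_eqVlt => /orP[/eqP h|//].
  have := L3 vunit (unitX k.+1 yunit) (ltW vIm) (Im0 _ kq') (esym h) => hv.
  by have := vne k.+1; rewrite hv eqxx.
set a := y ^+ k in hvk *.
have hb : y ^+ k.+1 = a * y by rewrite exprSr.
rewrite hb in hbv.
have aunit : `|a| = 1 by exact: unitX.
have bunit : `|a * y| = 1 by exact: unitM.
have anz : a != 0 by rewrite -normr_eq0 aunit oner_eq0.
have vnz : vv != 0 by rewrite -normr_eq0 vunit oner_eq0.
have Ia : 0 <= 'Im a by apply: Im0; apply: ltnW.
have Ib : 0 <= 'Im (a * y) by rewrite -hb; apply: Im0.
have h1 : 0 < 'Im (vv / a).
  apply: (L2 aunit vunit Ia (ltW vIm)) => //.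
  by rewrite ltr_pwDr.
have h2 : 0 < 'Im ((a * y) / vv).
  apply: (L2 vunit bunit (ltW vIm) Ib) => //.
  by rewrite ltr_pwDl.
have w1 : 'Re y < 'Re (vv / a).
  apply: (L1 (unitV vunit aunit) yunit (ltW h1) yIm0).
  have -> : y / (vv / a) = (a * y) / vv by rewrite invf_div mulrA (mulrC y a).
  exact: h2.
have w2 : 'Re y < 'Re ((a * y) / vv).
  apply: (L1 (unitV bunit vunit) yunit (ltW h2) yIm0).
  have -> : y / ((a * y) / vv) = vv / a by rewrite invf_div invfM mulrCA; congr (_ * _); rewrite mulrCA mulfV // mulr1.
  exact: h1.
have an : a ^+ n = (-1) ^+ k by rewrite /a exprAC yn.
case hk: (odd k).
  have : ((a * y) / vv) ^+ n = -1.
    by rewrite expr_div_n -hb exprAC yn vn signN1 /= hk /= invrN invr1 mulrN1.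
  by move/ymax; apply: ltle_contra w2.
have : (vv / a) ^+ n = -1.
  by rewrite expr_div_n an vn signN1 hk invr1 mulr1.
by move/ymax; apply: ltle_contra w1.
Qed.

Let posIm i : (0 < i < n)%N -> 0 < 'Im (y ^+ i).
Proof.
elim/ltn_ind: i => i IH hi.
case: i IH hi => [|[|j]] IH hi; first by [].
  by rewrite expr1.
set a := y ^+ j.+1.
have Ia : 0 < 'Im a by apply: IH => //; lia.
have aunit : `|a| = 1 by exact: unitX.
have hb : y ^+ j.+2 = a * y by rewrite exprSr.
rewrite hb real_ltNge ?realIm ?real0 //; apply/negP => hle.
case: (eqVneq (a * y) (-1)) => hb1.
  apply: (locate _ hi); first by rewrite hb.
  by move=> k hk; apply: IH => //; lia.
have [c1 c2] := crossing _ aunit Ia hle hb1.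
have an : a ^+ n = (-1) ^+ j.+1 by rewrite /a exprAC yn.
case ho: (odd (n + j.+1)).
  have : (- a) ^+ n = -1.
    by rewrite exprNn an -exprD signN1 ho.
  by move/ymax; apply: ltle_contra c1.
have : (- (a * y)) ^+ n = -1.
  by rewrite exprNn -hb exprAC yn -exprD signN1 addnS /= ho.
by move/ymax; apply: ltle_contra c2.
Qed.

Lemma prim_y : (n.*2).-primitive_root y.
Proof.
have h2n : (0 < n.*2)%N by lia.
have y2n : y ^+ n.*2 = 1 by rewrite -muln2 exprM yn sqrrN expr1n.
have [m pm mdvd] := prim_order_exists h2n y2n.
suff -> : n.*2 = m by [].
have m0 := prim_order_gt0 pm.
have ym := prim_expr_order pm.
have mle := dvdn_leq h2n mdvd.
have [hlt|hge] := ltnP m n.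
  by have := posIm m; rewrite m0 hlt ym Im1 ltxx => /(_ isT).
move: hge; rewrite leq_eqVlt => /orP[/eqP hmn|hnm].
  move: ym; rewrite -hmn yn => /eqP; rewrite -subr_eq0 -opprD oppr_eq0 -mulr2n pnatr_eq0 //.
move: mle; rewrite leq_eqVlt => /orP[/eqP //|hm2].
have : y ^+ (m - n) = -1.
  have e : m = (m - n + n)%N by rewrite subnK // ltnW.
  move: ym; rewrite {1}e exprD yn mulrN1 => /eqP.
  by rewrite eqr_oppLR => /eqP.
have := posIm (m - n); rewrite (_ : (0 < m - n < n)%N); last by lia.
by move=> /(_ isT) h1 h2; move: h1; rewrite h2 ImN1 ltxx.
Qed.

End Prim.



Lemma omega_prim n : (1 < n)%N -> n.-primitive_root (omega n).
Proof.
move=> n1; have h2 : (0 < n.*2)%N by rewrite double_gt0 ltnW.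
have [g pg] := C_prim_root_exists h2.
have hd : (n %| n.*2)%N by rewrite -muln2 dvdn_mulr.
have := dvdn_prim_root (prim_y _ n1 _ pg) hd.
by rewrite -muln2 mulKn // ltnW.
Qed.


Section G.
Variable n : nat.
Implicit Types x y : 'Z_n * 'Z_n.

Lemma expgE x k : (x ^+ k)%g = x *+ k.
Proof. elim: k => [|k IH]; first by []. by rewrite expgS mulrS IH. Qed.

Lemma fstMn x k : (x *+ k).1 = x.1 *+ k.
Proof. by elim: k => [|k IH] //; rewrite !mulrS /= IH. Qed.
Lemma sndMn x k : (x *+ k).2 = x.2 *+ k.
Proof. by elim: k => [|k IH] //; rewrite !mulrS /= IH. Qed.

Lemma symplMn g x k : sympl g (x *+ k) = sympl g x *+ k.
Proof. by rewrite /sympl fstMn sndMn mulrnBl !mulrnAr. Qed.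

Lemma sperp_cycle g x : (g \in sperp <[x]>%g) = (sympl g x == 0).
Proof.
rewrite inE; apply/forallP/idP.
  by move=> /(_ x); rewrite cycle_id.
move=> /eqP h y; apply/implyP => /cycleP [k ->].
by rewrite expgE symplMn h mul0rn.
Qed.

Lemma pairE x : x = (x.1, x.2). Proof. by case: x. Qed.
End G.

Lemma card_setI_sum (T : finType) (A B : {set T}) :
  #|A :&: B| = (\sum_(a in A) (a \in B : nat))%N.
Proof.
rewrite -sum1_card big_mkcond [RHS]big_mkcond /=; apply: eq_bigr => a _.
by rewrite inE; case: (a \in A); case: (a \in B).
Qed.

Theorem mainTheorem1 (n p m : nat) (x : 'Z_n * 'Z_n) (A : {set 'Z_n * 'Z_n}) :
  (1 < n)%N -> prime p -> (0 < m)%N -> #[x]%g = (p ^ m)%N ->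
  symFT A x = 0 ->
  #|A :&: sperp <[x *+ p]>%g| = (p * #|A :&: sperp <[x]>%g|)%N.
Proof.
move=> n1 pp m0 ox hFT.
have p0 : (0 < p)%N by apply: prime_gt0.
have p1 : (1 < p)%N by apply: prime_gt1.
set P := (p ^ m)%N.
set q := (p ^ m.-1)%N.
have q0 : (0 < q)%N by rewrite expn_gt0 p0.
have hPq : P = (q * p)%N by rewrite /P /q -expnSr prednK.
have P0 : (0 < P)%N by rewrite expn_gt0 p0.
have n0 : (0 < n)%N by apply: ltnW.
have Zn_n (z : 'Z_n) : z *+ n = 0 by rewrite -mulr_natr pchar_Zp // mulr0.
have xP : x *+ P = 0 by rewrite -expgE /P -ox expg_order.
have Pn : (P %| n)%N.
  rewrite /P -ox order_dvdn expgE; apply/eqP.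
  by rewrite [x *+ n]pairE fstMn sndMn !Zn_n.
have valMn (z : 'Z_n) k : val (z *+ k) = ((val z * k) %% n)%N.
  by rewrite Zp_mulrn /=; congr (_ %% _)%N; apply: Zp_cast.
pose s a := sympl a x.
have hs a : s a *+ P = 0.
  by rewrite /s -symplMn xP /sympl /= !mulr0 subrr.
set d := (n %/ P)%N.
have hdP : n = (d * P)%N by rewrite divnK.
have d0 : (0 < d)%N by rewrite divn_gt0 // dvdn_leq.
have hdvd a : (d %| val (s a))%N.
  have := hs a => /(congr1 val); rewrite valMn => h.
  have h' : (n %| val (s a) * P)%N by apply/eqP; exact: h.
  move: (val (s a)) h' => v; rewrite hdP.
  by rewrite dvdn_pmul2r.
pose j a := (val (s a) %/ d)%N.
have hj a : val (s a) = (j a * d)%N by rewrite divnK.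
have jP a : (j a < P)%N.
  have : (val (s a) < n)%N by exact: (leq_trans (ltn_ord (s a)) (eq_leq (Zp_cast n1))).
  rewrite hj; move: (j a) => v; rewrite hdP mulnC ltn_pmul2l //.
have pw := omega_prim _ n1.
have pz := dvdn_prim_root pw Pn.
rewrite -/d in pz.
set z := omega n ^+ d in pz.
have hFT' : \sum_(a in A) z ^+ j a = 0.
  transitivity (symFT A x); last exact: hFT.
  apply: eq_bigr => a _.
  by rewrite -/(s a) hj mulnC exprM.
pose F : {poly rat} := \sum_(a in A) 'X^(j a).
have rootF : root (map_poly ratr F) z.
  rewrite /root rmorph_sum horner_sum /=; apply/eqP; transitivity (\sum_(a in A) z ^+ j a); last exact: hFT'.
  by apply: eq_bigr => a _; rewrite map_polyXn hornerXn.
pose Psi : {poly rat} := \sum_(k < p) 'X^(k * q).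
have rootPsi : root (map_poly ratr Psi) z.
  rewrite /root rmorph_sum horner_sum /=.
  under eq_bigr => i _ do rewrite map_polyXn hornerXn mulnC exprM.
  have hzq : z ^+ q != 1 by rewrite -(prim_order_dvd pz) hPq; apply/negP => /(dvdn_leq q0); nia.
  have : (z ^+ q) ^+ p - 1 = 0 by rewrite -exprM -hPq prim_expr_order // subrr.
  by rewrite subrX1 => /eqP; rewrite mulf_eq0 subr_eq0 (negbTE hzq).
have [pm [Dpm mon_pm] dvd_pm] := minCpolyP z.
have pmPsi : (pm %| Psi)%R by rewrite -dvd_pm.
have pmF : (pm %| F)%R by rewrite -dvd_pm.
have size_pm : size pm = (p.-1 * q).+1.
  have := size_cyclotomic z P.
  by rewrite -(minCpoly_cyclotomic pz) Dpm size_map_poly /P totient_pfactor.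
have Psi0 : Psi != 0.
  apply/negP => /eqP h0; have := congr1 (horner^~ 1) h0.
  rewrite horner0 horner_sum; under eq_bigr => i _ do rewrite hornerXn expr1n.
  by rewrite sumr_const card_ord => /eqP; rewrite pnatr_eq0 (gtn_eqF p0).
have size_Psi_le : (size Psi <= (p.-1 * q).+1)%N.
  apply: leq_trans (size_sum _ _ _) _; apply/bigmax_leqP => k _.
  rewrite size_polyXn ltnS leq_mul2r; apply/orP; right.
  by have := ltn_ord k; lia.
have pmeq : (pm %= Psi)%R.
  rewrite -dvdp_size_eqp // eqn_leq (dvdp_leq Psi0 pmPsi) /=.
  by rewrite size_pm.
have hsPsi : size Psi = (p.-1 * q).+1 by rewrite -(eqp_size pmeq).
have PsiF : (Psi %| F)%R by rewrite -(eqp_dvdl _ pmeq).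
have [G hG] := dvdpP _ _ PsiF.
pose c i := (\sum_(a in A) (j a == i : nat))%N.
have hcoefF i : F`_i = (c i)%:R.
  rewrite coef_sum natr_sum; apply: eq_bigr => a _; by rewrite coefXn eq_sym.
have size_F : (size F <= P)%N.
  apply: leq_trans (size_sum _ _ _) _; apply/bigmax_leqP => a _.
  by rewrite size_polyXn.
have hGq i : (q <= i)%N -> G`_i = 0.
  move=> hi; case: (eqVneq G 0) => [->|Gnz]; first by rewrite coef0.
  have := size_mul Gnz Psi0; rewrite -hG hsPsi => hsz.
  apply: nth_default.
  have : ((size G + (p.-1 * q).+1).-1 <= P)%N by rewrite -hsz.
  have e : (p.-1 * q + q = q * p)%N by rewrite mulnC -mulnSr prednK.
  rewrite hPq addnS /= -e addnC leq_add2l => hG'; exact: leq_trans hG' hi.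
have hcoefk k : (k < p)%N -> F`_(k * q) = G`_0.
  move=> hk; rewrite hG /Psi mulr_sumr coef_sum (bigD1 (Ordinal hk)) //=.
  rewrite coefMXn ltnn subnn big1 ?addr0 // => l hl.
  rewrite coefMXn; case: ifP => // h; apply: hGq.
  have hl' : (val l != k) by apply: contra hl => /eqP h'; apply/eqP; apply: val_inj.
  move: h => /negbT; rewrite -leqNgt leq_pmul2r // => hlk.
  have hlk2 : (l < k)%N by rewrite ltn_neqAle hl' hlk.
  by rewrite -mulnBl leq_pmull // subn_gt0.
have hc k : (k < p)%N -> c (k * q)%N = c 0%N.
  move=> hk; apply/eqP; rewrite -(eqr_nat rat) -!hcoefF hcoefk //.
  by rewrite -(hcoefk 0%N) // mul0n.
rewrite !card_setI_sum.
have e1 a : (a \in sperp <[x]>%g) = (j a == 0%N).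
  rewrite sperp_cycle -/(s a).
  have -> : (s a == 0) = (val (s a) == 0%N) by rewrite -(inj_eq val_inj).
  by rewrite hj muln_eq0 (gtn_eqF d0) orbF.
have e2 a : (a \in sperp <[x *+ p]>%g) = (q %| j a)%N.
  rewrite sperp_cycle symplMn -/(s a).
  have -> : (s a *+ p == 0) = (n %| val (s a) * p)%N by rewrite -(inj_eq val_inj) valMn.
  rewrite hj; move: (j a) => v; rewrite hdP hPq.
  by rewrite mulnAC (mulnC d) !dvdn_pmul2r.
under eq_bigr => a _ do rewrite e2.
under [in RHS]eq_bigr => a _ do rewrite e1.
rewrite -/(c 0%N).
have -> : (\sum_(a in A) (q %| j a : nat) = \sum_(a in A) \sum_(k < p) (j a == k * q : nat))%N.
  apply: eq_bigr => a _; case: (boolP (q %| j a)%N) => h.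
    have hk0 : (j a %/ q < p)%N by rewrite ltn_divLR // mulnC -hPq.
    rewrite (bigD1 (Ordinal hk0)) //= divnK // eqxx big1 // => k hk.
    have hk' : (val k != j a %/ q)%N by apply: contra hk => /eqP h'; apply/eqP; apply: val_inj.
    apply/eqP; rewrite eqb0; rewrite -{1}(divnK h) eqn_pmul2r // eq_sym; exact: hk'.
  rewrite big1 // => k _; apply/eqP; rewrite eqb0; apply: contra h => /eqP ->.
  by rewrite dvdn_mull.
rewrite exchange_big /=.
rewrite (eq_bigr (fun _ => c 0%N)); last by move=> k _; rewrite -(hc k).
by rewrite sum_nat_const card_ord.
Qed.
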